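(* The sum over all finite groups $G$ of the ring homomorphisms $\mathrm{B}^\times(G)\to\mathrm{B}(\mathcal{R})$, $$\bigoplus_G\mathrm{B}^\times(G)\longrightarrow\mathrm{B}(\mathcal{R}),$$ is surjective.
   Context: A rack is a set $R$ with a binary operation $\rhd$ such that every left multiplication $\ell_a\colon b\mapsto a\rhd b$ is a bijection and $a\rhd(b\rhd c)=(a\rhd b)\rhd(a\rhd c)$ for all $a,b,c$. A subrack is a subset $S$ with $\ell_s(S)=S$ for all $s\in S$; a decomposition of $R$ into $S$ and $T$ means $S,T$ are disjoint subracks (possibly empty) with $S\cup T=R$. The Burnside ring of finite racks $\mathrm{B}(\mathcal{R})$ is the abelian group generated by symbols $b(R)$, one for each finite rack $R$, subject to $b(R_1)=b(R_2)$ whenever $R_1\cong R_2$ and $b(R)=b(S)+b(T)$ whenever $R$ decomposes into $S$ and $T$, with ring structure $b(R)b(R')=b(R\times R')$. For a finite group $G$, a crossed $G$-set is a finite $G$-set $X$ with a $G$-equivariant map $\delta\colon X\to\mathrm{Ad}(G)$, where $\mathrm{Ad}(G)$ is $G$ with conjugation action. The crossed Burnside ring $\mathrm{B}^\times(G)$ is the Grothendieck group of isomorphism classes of finite crossed $G$-sets with respect to disjoint union (with its ring structure). The homomorphism $\mathrm{B}^\times(G)\to\mathrm{B}(\mathcal{R})$ sends the class of $\delta\colon X\to\mathrm{Ad}(G)$ to $b(X,\rhd)$, where $x\rhd y=\delta(x)y$. *)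

(* Defs.v *)
From mathcomp Require Import all_boot all_fingroup.
Set Implicit Arguments. Unset Strict Implicit. Unset Printing Implicit Defensive.
Local Open Scope group_scope.

Record rack := Rack {
  rcar :> finType;
  rop : rcar -> rcar -> rcar;
  rop_bij : forall a, bijective (rop a);
  rop_dist : forall a b c, rop a (rop b c) = rop (rop a b) (rop a c) }.

Definition subrack (R : rack) (S : {set R}) : Prop :=
  forall s, s \in S -> [set rop s x | x in S] = S.

Definition rack_iso (R1 R2 : rack) : Prop :=
  exists f : R1 -> R2, bijective f /\ forall a b, f (rop a b) = rop (f a) (f b).

Section SubrackRack.
Variables (R : rack) (S : {set R}) (hS : subrack S).
Definition sr_car : finType := {x : R | x \in S}.

Lemma sr_closed (a b : sr_car) : rop (val a) (val b) \in S.
Proof.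
rewrite -[in X in _ \in X](hS (valP a)); apply/imsetP; exists (val b) => //.
exact: valP.
Qed.

Definition sr_op (a b : sr_car) : sr_car := exist (fun x : R => x \in S) _ (sr_closed a b).

Lemma sr_op_bij a : bijective (sr_op a).
Proof.
apply: injF_bij => x y /(congr1 val) /= H; apply: val_inj.
exact: (bij_inj (rop_bij (val a))).
Qed.

Lemma sr_op_dist a b c : sr_op a (sr_op b c) = sr_op (sr_op a b) (sr_op a c).
Proof. apply: val_inj; exact: rop_dist. Qed.

Definition subrack_rack : rack := Rack sr_op_bij sr_op_dist.
End SubrackRack.

(* ---------- The Burnside ring B(R) of finite racks (additive group) ----
   Elements are represented by formal words of signed generators
   (true, R) = +b(R), (false, R) = -b(R); beq is the congruence generated by
   the free-abelian-group laws and the defining relations, so the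
   quotient seq rterm / beq is exactly the presented group B(R). *)
Definition rterm := (bool * rack)%type.

Inductive beq : seq rterm -> seq rterm -> Prop :=
| beq_refl x : beq x x
| beq_sym x y : beq x y -> beq y x
| beq_trans x y z : beq x y -> beq y z -> beq x z
| beq_swap (u v : seq rterm) (a b : rterm) :
    beq (u ++ a :: b :: v) (u ++ b :: a :: v)
| beq_cancel (u v : seq rterm) (s : bool) (R : rack) :
    beq (u ++ (s, R) :: (~~ s, R) :: v) (u ++ v)
| beq_iso (u v : seq rterm) (s : bool) (R1 R2 : rack) :
    rack_iso R1 R2 -> beq (u ++ (s, R1) :: v) (u ++ (s, R2) :: v)
| beq_decomp (u v : seq rterm) (s : bool) (R : rack) (S T : {set R})
    (hS : subrack S) (hT : subrack T) :
    [disjoint S & T] -> S :|: T = setT ->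
    beq (u ++ (s, R) :: v)
        (u ++ (s, subrack_rack hS) :: (s, subrack_rack hT) :: v).

Record crossed_set (gT : finGroupType) := CrossedSet {
  cX :> finType;
  cact : gT -> cX -> cX;
  cact1 : forall x, cact 1 x = x;
  cactM : forall g h x, cact (g * h) x = cact g (cact h x);
  cdelta : cX -> gT;
  cdeltaJ : forall g x, cdelta (cact g x) = g * cdelta x * g^-1 }.

Section CrossedRack.
Variables (gT : finGroupType) (X : crossed_set gT).
Definition cr_op (x y : X) : X := cact (cdelta x) y.

Lemma cr_op_bij x : bijective (cr_op x).
Proof.
exists (cact (cdelta x)^-1) => y; rewrite /cr_op -cactM ?mulVg ?mulgV cact1 //.
Qed.

Lemma cr_op_dist a b c : cr_op a (cr_op b c) = cr_op (cr_op a b) (cr_op a c).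
Proof.
rewrite /cr_op cdeltaJ -!cactM; congr cact.
by rewrite -!mulgA mulVg mulg1.
Qed.

Definition crossed_rack : rack := Rack cr_op_bij cr_op_dist.
End CrossedRack.

(* an element of  (+)_G B^x(G)  is a finite signed sum of classes of crossed
   G-sets for various finite groups G *)
Definition xterm := (bool * {gT : finGroupType & crossed_set gT})%type.
Definition xterm_image (t : xterm) : rterm := (t.1, crossed_rack (projT2 t.2)).

(* Main.v *)
Require Import Defs.
From mathcomp Require Import all_boot all_fingroup.
Set Implicit Arguments. Unset Strict Implicit. Unset Printing Implicit Defensive.
Local Open Scope group_scope.

Section Aut.
Variable R : rack.
Definition autset : {set {perm R}} :=
  [set p : {perm R} | [forall a, forall b, p (rop a b) == rop (p a) (p b)]].
Lemma autsetP (p : {perm R}) : reflect (forall a b, p (rop a b) = rop (p a) (p b)) (p \in autset).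
Proof.
rewrite inE; apply: (iffP forallP) => [H a b|H a]; last by apply/forallP=> b; rewrite H.
by apply/eqP; move/forallP: (H a).
Qed.
Lemma autset_group : group_set autset.
Proof.
apply/group_setP; split; first by apply/autsetP => a b; rewrite !perm1.
move=> p q /autsetP Hp /autsetP Hq; apply/autsetP => a b.
by rewrite !permM Hp Hq.
Qed.
Canonical aut_group := Group autset_group.
Definition ell (x : R) : {perm R} := perm (bij_inj (rop_bij x)).
Lemma ellE x y : ell x y = rop x y. Proof. by rewrite permE. Qed.
Lemma ell_aut x : ell x \in autset.
Proof. by apply/autsetP => a b; rewrite !ellE rop_dist. Qed.
Definition G := subg_of aut_group.
Definition ract (g : G) (x : R) : R := (sgval g)^-1 x.
Lemma ract1 x : ract 1 x = x. Proof. by rewrite /ract /= invg1 perm1. Qed.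
Lemma ractM g h x : ract (g * h) x = ract g (ract h x).
Proof. by rewrite /ract /= invMg permM. Qed.
Definition rdelta (x : R) : G := subg aut_group (ell x)^-1.
Lemma rdeltaJ g x : rdelta (ract g x) = g * rdelta x * g^-1.
Proof.
apply: subg_inj => /=.
rewrite /rdelta /ract !subgK ?groupV ?ell_aut ?subgP //.
have Hp : (sgval g)^-1 \in autset by rewrite groupV subgP.
have -> : ell ((sgval g)^-1 x) = sgval g * ell x * (sgval g)^-1.
  apply/permP => y; rewrite !permM ellE ellE.
  move/autsetP: Hp => Hp; rewrite Hp; congr rop.
  by rewrite -permM mulgV perm1.
by rewrite !invMg invgK mulgA.
Qed.
Definition rcross : crossed_set G := CrossedSet ract1 ractM rdeltaJ.
Lemma rcross_iso : rack_iso R (crossed_rack rcross).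
Proof.
exists (fun x => x); split; first by exists (fun x => x).
move=> a b; rewrite /= /cr_op /= /ract /rdelta subgK ?groupV ?ell_aut //.
by rewrite invgK ellE.
Qed.
End Aut.

Lemma beq_cons t u v : beq u v -> beq (t :: u) (t :: v).
Proof.
elim=> {u v} [x|x y _ H|x y z _ H1 _ H2|u v a b|u v s R|u v s R1 R2 Hi|u v s R S T hS hT Hd Hc].
- exact: beq_refl.
- exact: beq_sym.
- exact: beq_trans H2.
- exact: (beq_swap (t :: u)).
- exact: (beq_cancel (t :: u)).
- exact: (beq_iso (t :: u) v s Hi).
- exact: (@beq_decomp (t :: u) v s R S T hS hT Hd Hc).
Qed.

Theorem proposition8p11 :
  forall x : seq rterm, exists y : seq xterm, beq x (map xterm_image y).
Proof.
elim=> [|[s R] x [y Hy]]; first by exists [::]; exact: beq_refl.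
exists ((s, existT (fun gT : finGroupType => crossed_set gT) (G R) (rcross R)) :: y) => /=.
apply: beq_trans (beq_cons _ Hy) _.
exact: (beq_iso [::] _ s (rcross_iso R)).
Qed.
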